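(* For every $f\in G_{\mathcal S}$, let $\mathcal R(f):=\big(f^{\circ-1}\big)^{\vdash-1}$, where $f^{\circ-1}$ is the inverse of $f$ for $\circ$ and $h^{\vdash-1}$ denotes the inverse of $h$ for $\vdash$. Then $$f=\mathcal R(f)\dashv f.$$
   Context: A reduced plane tree is a rooted plane tree in which every internal node has at least two children (a single leaf is allowed). Trees are encoded as words in noncommuting letters $S_0,S_1,\dots$ by reading nodes in preorder and writing $S_{k-1}$ for a node with $k$ children (a leaf is $S_0$); series are formal linear combinations of such words. For a tree $t_0$ with $n$ leaves and trees $t_1,\dots,t_n$, $t_0\circ(t_1,\dots,t_n)$ is obtained by replacing the leaves of $t_0$, from left to right, by $t_1,\dots,t_n$; this is extended multilinearly to series. The Schröder group $G_{\mathcal S}$ consists of series $p=S_0+\sum_{n\ge2}p_n$, $p_n$ a finite linear combination of trees with $n$ leaves, with product $p\circ q=q+\sum_{n\ge2}p_n\circ(q,\dots,q)$ (a group with identity $S_0$). For $f=S_0+\sum_{n\ge2}f_n$ and $g$ in $G_{\mathcal S}$ define $$f\dashv g=S_0+\sum_{n\ge2}f_n\circ(\underbrace{g,\dots,g}_{n-1},S_0),\qquad f\vdash g=g+\sum_{n\ge2}f_n\circ(\underbrace{S_0,\dots,S_0}_{n-1},g).$$ $G_{\mathcal S}$ is a group under $\vdash$ with identity $S_0$. *)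

(* Defs.v *)
From mathcomp Require Import all_boot all_algebra.
Set Implicit Arguments. Unset Strict Implicit. Unset Printing Implicit Defensive.
Import GRing.Theory.
Local Open Scope ring_scope.

(* Rooted plane trees: a node with its ordered list of children.
   A leaf (the word S_0) is [Node [::]]. *)
Inductive tree := Node of seq tree.

Definition leaf : tree := Node [::].

Definition is_leaf (t : tree) : bool := if t is Node [::] then true else false.

Fixpoint reduced (t : tree) : bool :=
  match t with
  | Node ts =>
      (size ts != 1%N) &&
      (fix all_red (l : seq tree) : bool :=
         match l with [::] => true | s :: l' => reduced s && all_red l' end) ts
  end.

Fixpoint prod_lists (A : Type) (ls : seq (seq A)) : seq (seq A) :=
  match ls with
  | [::] => [:: [::]]
  | l :: ls' => [seq x :: r | x <- l, r <- prod_lists ls']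
  end.

(* [decomps t] lists (once each) all pairs (t0, [:: t1; ...; tn]) with
   t = t0 o (t1, ..., tn), n = number of leaves of t0 (grafting the t_i on the
   leaves of t0 from left to right). *)
Fixpoint decomps (t : tree) : seq (tree * seq tree) :=
  match t with
  | Node ts =>
      (leaf, [:: t]) ::
      (if ts is [::] then [::]
       else [seq (Node (map fst c), flatten (map snd c))
            | c <- prod_lists (map decomps ts)])
  end.

(* Series: formal (possibly infinite) linear combinations of trees, given by
   their coefficient function.  Since there are finitely many reduced trees
   with n leaves, each homogeneous part is automatically finite. *)
Definition series (R : comNzRingType) := tree -> R.

Definition S0 (R : comNzRingType) : series R := fun t => if is_leaf t then 1 else 0.

(* Elements of the Schroder group: supported on reduced trees, coefficient 1
   on the leaf S_0 (all other reduced trees have >= 2 leaves). *)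
Definition in_GS (R : comNzRingType) (p : series R) : Prop :=
  p leaf = 1 /\ forall t, ~~ reduced t -> p t = 0.

(* p o q = q + sum_{n>=2} p_n o (q, ..., q), coefficientwise (multilinear
   extension of grafting). *)
Definition ocomp (R : comNzRingType) (p q : series R) : series R := fun t =>
  q t + \sum_(d <- decomps t | (2 <= size d.2)%N)
          p d.1 * \prod_(s <- d.2) q s.

(* f -| g = S_0 + sum_{n>=2} f_n o (g, ..., g, S_0)  (n-1 copies of g). *)
Definition dashv (R : comNzRingType) (f g : series R) : series R := fun t =>
  S0 R t + \sum_(d <- decomps t | (2 <= size d.2)%N)
          f d.1 * ((\prod_(s <- take (size d.2).-1 d.2) g s) *
                   (\prod_(s <- drop (size d.2).-1 d.2) S0 R s)).

(* f |- g = g + sum_{n>=2} f_n o (S_0, ..., S_0, g)  (n-1 copies of S_0). *)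
Definition vdash (R : comNzRingType) (f g : series R) : series R := fun t =>
  g t + \sum_(d <- decomps t | (2 <= size d.2)%N)
          f d.1 * ((\prod_(s <- take (size d.2).-1 d.2) S0 R s) *
                   (\prod_(s <- drop (size d.2).-1 d.2) g s)).

(* Main.v *)
Require Import Defs.
From mathcomp Require Import all_boot all_algebra.
Set Implicit Arguments. Unset Strict Implicit. Unset Printing Implicit Defensive.
Import GRing.Theory.
Local Open Scope ring_scope.

Section Tree.
Definition tree_ind2 (P : tree -> Prop) (Q : seq tree -> Prop)
  (H0 : Q [::]) (HC : forall t ts, P t -> Q ts -> Q (t :: ts))
  (HN : forall ts, Q ts -> P (Node ts)) : forall t, P t :=
  fix F t := match t with
    Node ts => HN ts ((fix G ts := match ts return Q ts with
                   | [::] => H0 | t :: ts' => HC t ts' (F t) (G ts') end) ts) end.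
End Tree.

Notation P ts := (prod_lists (map decomps ts)).

Lemma all_eq_big (R : comNzRingType) (I : Type) (a : pred I) (s : seq I) (F G : I -> R) :
  all a s -> (forall x, a x -> F x = G x) -> \sum_(x <- s) F x = \sum_(x <- s) G x.
Proof.
elim: s => [|x s IH] /=; first by rewrite !big_nil.
move=> /andP[ax as1] H; by rewrite !big_cons H // (IH as1 H).
Qed.

Lemma all_allpairs (A B C : Type) (f : A -> B -> C) (p : pred C) s t :
  (forall x y, p (f x y)) -> all p [seq f x y | x <- s, y <- t].
Proof.
move=> H; elim: s => //= x s IH; rewrite all_cat IH andbT.
clear IH; by elim: t => //= y t ->; rewrite H.
Qed.

Lemma decE ts : decomps (Node ts) = (leaf, [:: Node ts]) ::
  (if ts is [::] then [::] else [seq (Node (map fst c), flatten (map snd c)) | c <- P ts]).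
Proof. by case: ts. Qed.

Lemma decE' ts : (0 < size ts)%N -> decomps (Node ts) = (leaf, [:: Node ts]) ::
  [seq (Node (map fst c), flatten (map snd c)) | c <- P ts].
Proof. by case: ts. Qed.

Lemma P_inv (A : Type) (p : pred A) ls : all (all p) ls ->
  all (fun c => (size c == size ls) && all p c) (prod_lists ls).
Proof.
elim: ls => //= l ls IH /andP[pl pls].
elim: l pl => //= x l IHl /andP[px pl]; rewrite all_cat IHl // andbT all_map.
apply: sub_all (IH pls) => c /andP[/eqP sc ac] /=.
by rewrite sc eqxx px ac.
Qed.

Definition pos (d : tree * seq tree) := (0 < size d.2)%N.

Lemma dec_pos t : all pos (decomps t).
Proof.
move: t; apply: (@tree_ind2 (fun t => all pos (decomps t)) (fun ts => all (fun t => all pos (decomps t)) ts)) => //.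
  by move=> t ts /= -> ->.
move=> ts Hts; rewrite decE /=; case: ts Hts => [//|t1 ts'] Hts.
rewrite all_map.
have := @P_inv _ pos (map decomps (t1 :: ts')).
rewrite all_map => /(_ Hts); apply: sub_all => c /andP[sc ac] /=.
case: c sc ac => //= z c' _ /andP[pz _]; rewrite /pos /= size_cat.
exact: leq_trans pz (leq_addr _ _).
Qed.

Lemma size_flat (c : seq (tree * seq tree)) : all pos c ->
  (size c <= size (flatten (map snd c)))%N.
Proof.
elim: c => //= z c IH /andP[pz pc]; rewrite size_cat.
exact: (leq_add pz (IH pc)).
Qed.

Section Alg.
Variable R : comNzRingType.
Implicit Types p q : series R.

Lemma RU_core t : forall G : tree -> R,
  \sum_(d <- decomps t) G d.1 * \prod_(s <- d.2) S0 R s = G t.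
Proof.
move: t; apply: (@tree_ind2 (fun t => forall G : tree -> R,
  \sum_(d <- decomps t) G d.1 * \prod_(s <- d.2) S0 R s = G t) (fun ts => forall H : seq tree -> R,
  \sum_(c <- P ts) H (map fst c) * \prod_(z <- c) \prod_(s <- z.2) S0 R s = H ts)).
- by move=> H /=; rewrite big_seq1 big_nil mulr1.
- move=> t ts IHt IHts H /=.
  rewrite big_allpairs_dep /=.
  under eq_bigr => x _.
    under eq_bigr => r _ do rewrite big_cons mulrCA.
    rewrite -mulr_sumr (IHts (fun l => H (x.1 :: l))) mulrC.
  over.
  exact: (IHt (fun u => H (u :: ts))).
- move=> ts IH G; rewrite decE big_cons /=.
  case: ts IH => [|t1 ts'] IH.
    by rewrite big_nil big_seq1 /S0 /= mulr1 addr0.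
  rewrite big_seq1 /S0 /= mulr0 add0r big_map.
  under eq_bigr => c _ do rewrite big_flatten big_map /=.
  exact: (IH (fun l => G (Node l))).
Qed.

Lemma P_ok ts : all (fun c => (size c == size ts) && all pos c) (P ts).
Proof.
have := @P_inv _ pos (map decomps ts); rewrite size_map; apply.
by elim: ts => //= t ts ->; rewrite dec_pos.
Qed.

Lemma P_cat (A : Type) (ls1 ls2 : seq (seq A)) (G : seq A -> R) :
  \sum_(c <- prod_lists (ls1 ++ ls2)) G c =
  \sum_(c1 <- prod_lists ls1) \sum_(c2 <- prod_lists ls2) G (c1 ++ c2).
Proof.
elim: ls1 G => [|l ls1 IH] G /=; first by rewrite big_seq1.
rewrite !big_allpairs_dep; apply: eq_bigr => x _; rewrite IH.
by [].
Qed.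

Notation flat c := (flatten (map snd c)).

Lemma Psingle (u : tree) (G : seq (tree * seq tree) -> R) :
  \sum_(c <- P [:: u]) G c = \sum_(d <- decomps u) G [:: d].
Proof.
have -> : P [:: u] = [seq x :: r | x <- decomps u, r <- [:: [::]]] by [].
by rewrite big_allpairs_dep; apply: eq_bigr => d _; rewrite big_seq1.
Qed.

Lemma assoc t : forall F : tree -> seq tree -> seq tree -> R,
  \sum_(x <- decomps t) \sum_(y <- decomps x.1) F y.1 y.2 x.2 =
  \sum_(x <- decomps t) \sum_(c <- P x.2) F x.1 (map fst c) (flat c).
Proof.
move: t; apply: (@tree_ind2 (fun t => forall F : tree -> seq tree -> seq tree -> R,
  \sum_(x <- decomps t) \sum_(y <- decomps x.1) F y.1 y.2 x.2 =
  \sum_(x <- decomps t) \sum_(c <- P x.2) F x.1 (map fst c) (flat c))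
  (fun ts => forall K : seq tree -> seq tree -> seq tree -> R,
  \sum_(c <- P ts) \sum_(e <- P (map fst c)) K (map fst e) (flat e) (flat c) =
  \sum_(c <- P ts) \sum_(c' <- P (flat c)) K (map fst c) (map fst c') (flat c'))).
- by move=> K /=; rewrite !big_seq1.
- move=> t ts IHt IHts K /=.
  rewrite !big_allpairs_dep /=.
  under eq_bigr => x _.
    under eq_bigr => r _ do rewrite big_allpairs_dep /=.
    rewrite exchange_big /=.
    under eq_bigr => y _ do rewrite (IHts (fun a b c => K (y.1 :: a) (y.2 ++ b) (x.2 ++ c))).
  over.
  apply: eq_trans (IHt (fun a b c => \sum_(r <- P ts) \sum_(c'' <- P (flat r))
      K (a :: map fst r) (b ++ map fst c'') (c ++ flat c''))) _.
  apply: eq_bigr => x _.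
  under [RHS]eq_bigr => r _ do rewrite map_cat P_cat.
  rewrite exchange_big /=; apply: eq_bigr => c1 _; apply: eq_bigr => r _.
  apply: eq_bigr => c2 _; by rewrite !map_cat flatten_cat.
- move=> ts IH F; rewrite decE.
  case: ts IH => [|t1 ts'] IH.
    by rewrite /= !big_seq1 /=.
  set ts := t1 :: ts'.
  rewrite big_cons [in RHS]big_cons Psingle decE [X in X + _ = _]big_seq1 [in RHS]big_cons !big_map.
  rewrite (@all_eq_big _ _ _ _ _ (fun c => F leaf [:: Node (map fst c)] (flat c) +
      \sum_(e <- P (map fst c)) F (Node (map fst e)) (flat e) (flat c)) (P_ok ts)); last first.
    move=> c /andP[sc _]; rewrite decE'; last by case: c sc.
    by rewrite big_cons big_map.
  rewrite big_split addrA; congr (_ + _ + _).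
    by apply: eq_bigr => c _; rewrite /= cats0.
  exact: (IH (fun u v w => F (Node u) v w)).
Qed.

Definition full (p : series R) (Phi : seq tree -> R) : series R :=
  fun t => \sum_(d <- decomps t) p d.1 * Phi d.2.
Definition lp (a b : series R) (s : seq tree) : R :=
  (\prod_(x <- take (size s).-1 s) a x) * (\prod_(x <- drop (size s).-1 s) b x).
Definition Th (Phi Psi : seq tree -> R) (ws : seq tree) : R :=
  \sum_(c <- P ws) Phi (map fst c) * Psi (flat c).

Lemma lp_nil a b : lp a b [::] = 1.
Proof. by rewrite /lp /= !big_nil mulr1. Qed.

Lemma lp_rcons a b s x : lp a b (rcons s x) = (\prod_(y <- s) a y) * b x.
Proof.
by rewrite /lp size_rcons /= -cats1 take_size_cat // drop_size_cat // big_seq1.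
Qed.

Lemma lp_seq1 a b x : lp a b [:: x] = b x.
Proof. by have := lp_rcons a b [::] x; rewrite big_nil mul1r. Qed.

Lemma lp_cat a b u v : (0 < size v)%N -> lp a b (u ++ v) = (\prod_(y <- u) a y) * lp a b v.
Proof.
by case/lastP: v => [//|v z] _; rewrite -rcons_cat !lp_rcons big_cat mulrA.
Qed.

Lemma lp_same a s : lp a a s = \prod_(y <- s) a y.
Proof. by rewrite /lp -big_cat cat_take_drop. Qed.

Lemma lp_ext a b a' b' s : (forall y, a y = a' y) -> (forall y, b y = b' y) ->
  lp a b s = lp a' b' s.
Proof.
by move=> Ha Hb; rewrite /lp (eq_bigr _ (fun y _ => Ha y)) (eq_bigr _ (fun y _ => Hb y)).
Qed.

Lemma full_extP p Phi Psi t : (forall s, Phi s = Psi s) -> full p Phi t = full p Psi t.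
Proof. by move=> H; apply: eq_bigr => d _; rewrite H. Qed.

Lemma full_extp p q Phi t : (forall u, p u = q u) -> full p Phi t = full q Phi t.
Proof. by move=> H; apply: eq_bigr => d _; rewrite H. Qed.

Lemma full_assoc p Phi Psi t : full (full p Phi) Psi t = full p (Th Phi Psi) t.
Proof.
rewrite /full; under eq_bigr => x _ do rewrite mulr_suml.
apply: eq_trans (assoc t (fun u v w => p u * Phi v * Psi w)) _.
apply: eq_bigr => x _; rewrite /Th mulr_sumr; apply: eq_bigr => c _.
by rewrite mulrA.
Qed.

Lemma distr (A : Type) (phi : A -> R) (ls : seq (seq A)) :
  \sum_(c <- prod_lists ls) \prod_(z <- c) phi z = \prod_(l <- ls) \sum_(z <- l) phi z.
Proof.
elim: ls => [|l ls IH] /=; first by rewrite big_seq1 !big_nil.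
rewrite big_allpairs_dep big_cons mulr_suml; apply: eq_bigr => x _.
by rewrite -IH mulr_sumr; apply: eq_bigr => r _; rewrite big_cons.
Qed.

Lemma mapfst_rcons (c : seq (tree * seq tree)) d : map fst (c ++ [:: d]) = rcons (map fst c) d.1.
Proof. by rewrite map_cat cats1. Qed.

Lemma flat_rcons (c : seq (tree * seq tree)) d : flat (c ++ [:: d]) = flat c ++ d.2.
Proof. by rewrite map_cat flatten_cat /= cats0. Qed.

Lemma Th_lp a b a' b' ws :
  Th (lp a b) (lp a' b') ws = lp (full a (lp a' a')) (full b (lp a' b')) ws.
Proof.
case/lastP: ws => [|ws w].
  by rewrite /Th /= big_seq1 !lp_nil mulr1.
rewrite lp_rcons /Th -cats1 map_cat P_cat.
under [LHS]eq_bigr => c1 _.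
  rewrite Psingle.
  rewrite (@all_eq_big _ _ _ _ _ (fun d => ((\prod_(y <- map fst c1) a y) *
     (\prod_(y <- flat c1) a' y)) * (b d.1 * lp a' b' d.2)) (dec_pos w)); last first.
    by move=> d pd; rewrite mapfst_rcons flat_rcons lp_rcons lp_cat // mulrACA.
  rewrite -mulr_sumr.
over.
rewrite -mulr_suml; congr (_ * _).
rewrite (eq_bigr (fun c1 => \prod_(z <- c1) (a z.1 * \prod_(y <- z.2) a' y))); last first.
  by move=> c1 _; rewrite big_map big_flatten big_map -big_split.
rewrite distr big_map; apply: eq_bigr => w' _; rewrite /full.
by apply: eq_bigr => d _; rewrite lp_same.
Qed.

Lemma LU Psi t : full (S0 R) Psi t = Psi [:: t].
Proof.
rewrite /full; case: t => ts.
case: (posnP (size ts)) => [/size0nil -> | Hts].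
  by rewrite /= big_seq1 /S0 /= mul1r.
rewrite decE' // big_cons big_map /S0 /= mul1r.
rewrite (@all_eq_big _ _ _ _ _ (fun _ => 0) (P_ok ts)) ?big1 ?addr0 //.
by move=> c /andP[sc _]; case: c sc => [|z c'] /=; [move=> /eqP sc; rewrite -sc in Hts | rewrite mul0r].
Qed.

Lemma RU p t : full p (lp (S0 R) (S0 R)) t = p t.
Proof. rewrite /full; under eq_bigr do rewrite lp_same; exact: RU_core. Qed.

Lemma full_gen p Phi t : in_GS p ->
  full p Phi t = p leaf * Phi [:: t] + \sum_(d <- decomps t | (2 <= size d.2)%N) p d.1 * Phi d.2.
Proof.
move=> Hp; rewrite /full; case: t => ts.
rewrite decE !big_cons /=; congr (_ + _).
case: ts => [|t1 ts']; first by rewrite !big_nil.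
set ts := t1 :: ts'.
rewrite !big_map [RHS]big_mkcond.
apply: (@all_eq_big _ _ _ _ _ _ (P_ok ts)) => c /andP[sc pc] /=.
case: ifP => // H.
case: c sc pc H => [//|z [|z' c']] sc pc H.
  by rewrite (proj2 Hp) ?mul0r.
by rewrite (leq_trans _ (size_flat pc)) in H.
Qed.

Lemma ocomp_full p q t : in_GS p -> ocomp p q t = full p (lp q q) t.
Proof.
move=> Hp; rewrite full_gen // (proj1 Hp) mul1r lp_same big_seq1 /ocomp.
by congr (_ + _); apply: eq_bigr => d _; rewrite lp_same.
Qed.

Lemma dashv_full p q t : in_GS p -> dashv p q t = full p (lp q (S0 R)) t.
Proof. by move=> Hp; rewrite full_gen // (proj1 Hp) mul1r lp_seq1. Qed.

Lemma vdash_full p q t : in_GS p -> vdash p q t = full p (lp (S0 R) q) t.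
Proof. by move=> Hp; rewrite full_gen // (proj1 Hp) mul1r lp_seq1. Qed.

End Alg.

Theorem mainTheorem3 (R : comNzRingType) (f g h : series R) :
  in_GS f -> in_GS g -> in_GS h ->
  (forall t, ocomp f g t = @S0 R t) -> (forall t, ocomp g f t = @S0 R t) ->
  (forall t, vdash h g t = @S0 R t) -> (forall t, vdash g h t = @S0 R t) ->
  forall t, f t = dashv h f t.
Proof.
move=> Gf Gg Gh Hfg Hgf Hhg Hgh t.
have Ofg u : full f (lp g g) u = S0 R u by rewrite -ocomp_full.
have Ogf u : full g (lp f f) u = S0 R u by rewrite -ocomp_full.
have Vgh u : full g (lp (S0 R) h) u = S0 R u by rewrite -vdash_full.
set x := full f (lp g (S0 R)).
have A u : full x (lp (S0 R) g) u = S0 R u.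
  rewrite /x full_assoc -(Ofg u); apply: full_extP => s; rewrite Th_lp.
  by apply: lp_ext => y; rewrite ?RU ?LU ?lp_seq1.
have Hx u : h u = x u.
  transitivity (full (S0 R) (lp (S0 R) h) u); first by rewrite LU lp_seq1.
  transitivity (full (full x (lp (S0 R) g)) (lp (S0 R) h) u).
    by apply: full_extp => v; rewrite A.
  rewrite full_assoc -[RHS](RU x u); apply: full_extP => s; rewrite Th_lp.
  by apply: lp_ext => y; rewrite ?Vgh ?LU ?lp_seq1.
rewrite dashv_full //.
transitivity (full x (lp f (S0 R)) t); last by apply: full_extp => v; rewrite Hx.
rewrite /x full_assoc -[LHS](RU f t); apply: full_extP => s; rewrite Th_lp.
by apply: lp_ext => y; rewrite ?Ogf ?LU ?lp_seq1.
Qed.
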